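(* Let $k\geq 3$ be an integer, $\sigma=\begin{pmatrix}\frac13&0\\0&\frac23\end{pmatrix}$, and $D_1=\sigma\otimes\frac{I_3}{3}\otimes\frac{I_k}{k}\in M_{6k}$. There exists an extreme point of the convex set $\mathcal{CP}(M_{6k},M_{6k};D_1,D_1)$ with Choi rank $8k$.
   Context: $M_n$ denotes the complex $n\times n$ matrices. For positive semidefinite $A\in M_{d_1}$, $B\in M_{d_2}$, $\mathcal{CP}(M_{d_1},M_{d_2};A,B)$ is the convex set of completely positive maps $\Phi:M_{d_1}\to M_{d_2}$ with $\Phi(I_{d_1})=B$ and $\Phi^*(I_{d_2})=A$ ($\Phi^*$ the Hilbert–Schmidt adjoint); equivalently $\Phi(X)=\sum_iK_iXK_i^\dagger$ with $\sum_iK_i^\dagger K_i=A$, $\sum_iK_iK_i^\dagger=B$. An extreme point of a convex set $\mathcal{K}$ is an element not expressible as $t\Phi_1+(1-t)\Phi_2$ with $t\in(0,1)$ and distinct $\Phi_1,\Phi_2\in\mathcal{K}$. The Choi rank of $\Phi$ is the rank of $\sum_{r,s}E_{rs}\otimes\Phi(E_{rs})$. *)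

(* Defs.v *)
From HB Require Import structures.
From mathcomp Require Import all_boot all_order all_algebra.
From mathcomp Require Import complex mxtens.
From mathcomp Require Import reals.
Set Implicit Arguments. Unset Strict Implicit. Unset Printing Implicit Defensive.
Import Order.TTheory GRing.Theory Num.Theory.
Local Open Scope ring_scope.

Section QDefs.
Variable C : numClosedFieldType.

Definition adjmx m n (A : 'M[C]_(m, n)) : 'M[C]_(n, m) := (map_mx Num.conj A)^T.

(* a (linear) map M_d1 -> M_d2 is completely positive iff it has a Kraus form
   Phi(X) = sum_i K_i X K_i^dagger  (finite family of Kraus operators) *)
Definition krausmap d1 d2 (K : seq 'M[C]_(d2, d1)) (X : 'M[C]_d1) : 'M[C]_d2 :=
  \sum_(M <- K) (M *m X *m adjmx M).

Definition is_CP d1 d2 (Phi : 'M[C]_d1 -> 'M[C]_d2) : Prop :=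
  exists K : seq 'M[C]_(d2, d1), Phi =1 krausmap K.

(* Phi^*(Y) = Z for the Hilbert-Schmidt adjoint Phi^*:
   <Y, Phi X>_HS = <Z, X>_HS for all X, with <A,B>_HS = tr(A^dagger B). *)
Definition HSadj_at d1 d2 (Phi : 'M[C]_d1 -> 'M[C]_d2) (Y : 'M[C]_d2) (Z : 'M[C]_d1) : Prop :=
  forall X : 'M[C]_d1, \tr (adjmx Y *m Phi X) = \tr (adjmx Z *m X).

Definition CPset d1 d2 (A : 'M[C]_d1) (B : 'M[C]_d2) (Phi : 'M[C]_d1 -> 'M[C]_d2) : Prop :=
  is_CP Phi /\ Phi 1%:M = B /\ HSadj_at Phi 1%:M A.

(* extreme point of a convex set of maps (given as a predicate);
   0 < t < 1 in a numClosedField forces t to be real *)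
Definition extreme_point d1 d2 (S : ('M[C]_d1 -> 'M[C]_d2) -> Prop)
    (Phi : 'M[C]_d1 -> 'M[C]_d2) : Prop :=
  S Phi /\
  ~ (exists (t : C) (Phi1 Phi2 : 'M[C]_d1 -> 'M[C]_d2),
        [/\ 0 < t < 1, S Phi1, S Phi2, Phi1 <> Phi2 &
            forall X, Phi X = t *: Phi1 X + (1 - t) *: Phi2 X]).

Definition choi d1 d2 (Phi : 'M[C]_d1 -> 'M[C]_d2) : 'M[C]_(d1 * d2) :=
  \sum_(r < d1) \sum_(s < d1) (delta_mx r s *t Phi (delta_mx r s)).

Definition choi_rank d1 d2 (Phi : 'M[C]_d1 -> 'M[C]_d2) : nat := \rank (choi Phi).

End QDefs.

Definition sigma_mx (C : numClosedFieldType) : 'M[C]_2 :=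
  \matrix_(i < 2, j < 2) (if i == j then (if i == 0 :> nat then 3^-1 else 2 / 3) else 0).

Definition D1 (C : numClosedFieldType) (k : nat) : 'M[C]_(2 * 3 * k) :=
  (sigma_mx C *t ((3 : C)^-1 *: (1%:M : 'M[C]_3))) *t ((k%:R : C)^-1 *: (1%:M : 'M[C]_k)).

(* Main.v *)
Require Import Defs.
From HB Require Import structures.
From mathcomp Require Import all_boot all_order all_algebra.
From mathcomp Require Import complex mxtens.
From mathcomp Require Import reals.
From Stdlib Require Import FunctionalExtensionality.
From mathcomp Require Import ring zify.
Set Implicit Arguments. Unset Strict Implicit. Unset Printing Implicit Defensive.
Import Order.TTheory GRing.Theory Num.Theory.
Local Open Scope ring_scope.

Section Generic.
Variable C : numClosedFieldType.
Lemma adjmxE m n (A : 'M[C]_(m,n)) i j : adjmx A i j = (A j i)^*.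
Proof. by rewrite /adjmx !mxE. Qed.
Lemma adjmxM m n p (A : 'M[C]_(m,n)) (B : 'M[C]_(n,p)) :
  adjmx (A *m B) = adjmx B *m adjmx A.
Proof.
apply/matrixP=> i j; rewrite adjmxE !mxE rmorph_sum; apply: eq_bigr => k _.
by rewrite !adjmxE rmorphM mulrC.
Qed.
Lemma adjmxD m n (A B : 'M[C]_(m,n)) : adjmx (A + B) = adjmx A + adjmx B.
Proof. by apply/matrixP=> i j; rewrite !adjmxE !mxE rmorphD. Qed.
Lemma adjmxZ m n a (A : 'M[C]_(m,n)) : adjmx (a *: A) = a^* *: adjmx A.
Proof. by apply/matrixP=> i j; rewrite !adjmxE !mxE rmorphM. Qed.
Lemma adjmx_sum m n I (r : seq I) (P : pred I) (F : I -> 'M[C]_(m,n)) :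
  adjmx (\sum_(i <- r | P i) F i) = \sum_(i <- r | P i) adjmx (F i).
Proof.
apply/matrixP=> i j; rewrite adjmxE !summxE rmorph_sum.
by apply: eq_bigr => k _; rewrite adjmxE.
Qed.
Lemma adjmx1 n : adjmx (1%:M : 'M[C]_n) = 1%:M.
Proof. by apply/matrixP=> i j; rewrite adjmxE !mxE conjC_nat eq_sym. Qed.
Lemma adjmxK m n (A : 'M[C]_(m,n)) : adjmx (adjmx A) = A.
Proof. by apply/matrixP=> i j; rewrite !adjmxE conjCK. Qed.
Definition kseq r m n (f : 'I_r -> 'M[C]_(m,n)) := map f (enum 'I_r).
Lemma krausmapE r m n (f : 'I_r -> 'M[C]_(m,n)) X :
  krausmap (kseq f) X = \sum_i f i *m X *m adjmx (f i).
Proof. by rewrite /krausmap /kseq big_map big_enum. Qed.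
End Generic.
From mathcomp Require Import ring.
Section Span.
Variable C : numClosedFieldType.
Definition ip m n (w M : 'M[C]_(m,n)) := \sum_(p : 'I_m * 'I_n) (w p.1 p.2)^* * M p.1 p.2.
Definition qf m n (w : 'M[C]_(m,n)) (Phi : 'M[C]_n -> 'M[C]_m) :=
  \sum_(pq : ('I_m * 'I_n) * ('I_m * 'I_n))
     (w pq.1.1 pq.1.2)^* * Phi (delta_mx pq.1.2 pq.2.2) pq.1.1 pq.2.1 * w pq.2.1 pq.2.2.
Lemma eq_qf m n w (F G : 'M[C]_n -> 'M[C]_m) : F =1 G -> qf w F = qf w G.
Proof. by move=> FG; apply: eq_bigr => pq _; rewrite FG. Qed.
Lemma qf_lin m n w (F G : 'M[C]_n -> 'M[C]_m) s u :
  qf w (fun X => s *: F X + u *: G X) = s * qf w F + u * qf w G.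
Proof.
rewrite /qf !mulr_sumr -big_split; apply: eq_bigr => pq _ /=.
by rewrite !mxE; ring.
Qed.
Lemma sandw_delta m n (M : 'M[C]_(m,n)) b b' a a' :
  (M *m delta_mx b b' *m adjmx M) a a' = M a b * (M a' b')^*.
Proof.
have E1 : forall y, (M *m delta_mx b b') a y = M a b * (y == b')%:R.
  move=> y; rewrite !mxE (bigD1 b) //= big1 => [|x /negbTE xb]; last first.
    by rewrite !mxE xb mulr0.
  by rewrite !mxE eqxx addr0.
rewrite !mxE (bigD1 b') //= big1 => [|y /negbTE yb]; last first.
  by rewrite E1 yb mulr0 mul0r.
by rewrite E1 eqxx mulr1 addr0 adjmxE.
Qed.
Lemma qf_term m n w (M : 'M[C]_(m,n)) :
  qf w (fun X => M *m X *m adjmx M) = ip w M * (ip w M)^*.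
Proof.
rewrite /qf /ip rmorph_sum mulr_suml; under [RHS]eq_bigr do rewrite mulr_sumr.
rewrite [RHS]pair_big /=; apply: eq_bigr => -[p q] _ /=.
rewrite sandw_delta rmorphM /= conjCK; ring.
Qed.
Lemma qf_kraus m n w (L : seq 'M[C]_(m,n)) :
  qf w (krausmap L) = \sum_(M <- L) ip w M * (ip w M)^*.
Proof.
elim: L => [|M L IH].
  rewrite big_nil /qf big1 // => pq _.
  by rewrite /krausmap big_nil mxE mulr0 mul0r.
rewrite big_cons -IH -qf_term.
rewrite /qf -big_split; apply: eq_bigr => pq _ /=.
by rewrite /krausmap big_cons mxE; ring.
Qed.
Lemma sum_mxvec m n (F : 'I_(m * n) -> C) :
  \sum_x F x = \sum_(p : 'I_m * 'I_n) F (mxvec_index p.1 p.2).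
Proof.
rewrite (reindex (uncurry (@mxvec_index m n))) /=; last exact: curry_mxvec_bij.
by apply: eq_bigr => -[a b] _.
Qed.
Lemma span_of_orth r m n (f : 'I_r -> 'M[C]_(m,n)) (L : 'M[C]_(m,n)) :
  (forall w, (forall i, ip w (f i) = 0) -> ip w L = 0) ->
  exists c : 'I_r -> C, L = \sum_i c i *: f i.
Proof.
move=> H.
pose Mk : 'M[C]_(r, m * n) := \matrix_(i, j) mxvec (f i) 0 j.
have sub : (mxvec L <= Mk)%MS.
  rewrite submxE; apply/eqP/matrixP => z j; rewrite [z]ord1 !mxE.
  pose w : 'M[C]_(m,n) := \matrix_(a, b) (cokermx Mk (mxvec_index a b) j)^*.
  have ipE : forall M, ip w M = \sum_x mxvec M 0 x * cokermx Mk x j.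
    move=> M; rewrite sum_mxvec /ip; apply: eq_bigr => p _.
    by rewrite !mxE conjCK mxvecE mulrC.
  rewrite -ipE; apply: H => i; rewrite ipE.
  transitivity ((Mk *m cokermx Mk) i j); last by rewrite mulmx_coker mxE.
  by rewrite [RHS]mxE; apply: eq_bigr => x _; rewrite [Mk _ _]mxE.
case/submxP: sub => D HD.
exists (fun i => D 0 i); apply/matrixP => a b.
rewrite -(mxvecE L) HD !mxE summxE; apply: eq_bigr => i _.
by rewrite !mxE mxvecE.
Qed.
End Span.
From mathcomp Require Import ring.
Section Extreme.
Variable C : numClosedFieldType.
Definition indep2 r m n (f : 'I_r -> 'M[C]_(m,n)) := forall S : 'M[C]_r,
  \sum_i \sum_j S i j *: (f i *m adjmx (f j)) = 0 ->
  \sum_i \sum_j S i j *: (adjmx (f j) *m f i) = 0 -> S = 0.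
Lemma expand_lin r m n (f : 'I_r -> 'M[C]_(m,n)) (c : 'I_r -> C) X :
  (\sum_i c i *: f i) *m X *m adjmx (\sum_j c j *: f j)
  = \sum_i \sum_j (c i * (c j)^*) *: (f i *m X *m adjmx (f j)).
Proof.
rewrite adjmx_sum !mulmx_suml; apply: eq_bigr => i _.
rewrite mulmx_sumr; apply: eq_bigr => j _.
by rewrite adjmxZ -!scalemxAl -scalemxAr scalerA mulrC.
Qed.
Lemma expand_lin2 r m n (f : 'I_r -> 'M[C]_(m,n)) (c : 'I_r -> C) :
  adjmx (\sum_j c j *: f j) *m (\sum_i c i *: f i)
  = \sum_i \sum_j (c i * (c j)^*) *: (adjmx (f j) *m f i).
Proof.
rewrite adjmx_sum mulmx_sumr; apply: eq_bigr => i _.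
rewrite mulmx_suml; apply: eq_bigr => j _.
by rewrite adjmxZ -scalemxAl -scalemxAr scalerA mulrC.
Qed.
Lemma sum_delta1 r m n (G : 'I_r -> 'M[C]_(m,n)) (i : 'I_r) :
  \sum_j (1%:M : 'M[C]_r) i j *: G j = G i.
Proof.
rewrite (bigD1 i) //= big1 => [|j /negbTE ji]; last by rewrite mxE eq_sym ji scale0r.
by rewrite mxE eqxx scale1r addr0.
Qed.
Lemma kraus_in_span r m n (f : 'I_r -> 'M[C]_(m,n)) (L : seq 'M[C]_(m,n)) :
  (forall M, M \in L -> exists c : 'I_r -> C, M = \sum_i c i *: f i) ->
  exists T : 'M[C]_r, forall X,
    krausmap L X = \sum_i \sum_j T i j *: (f i *m X *m adjmx (f j)).
Proof.
elim: L => [|M L IH] H.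
  exists 0 => X; rewrite /krausmap big_nil; symmetry.
  by apply: big1 => i _; apply: big1 => j _; rewrite mxE scale0r.
have [|T ET] := IH; first by move=> N NL; apply: H; rewrite inE NL orbT.
have [c ->] := H M (mem_head _ _).
exists (T + \matrix_(i, j) (c i * (c j)^*)) => X.
rewrite /krausmap big_cons -/(krausmap L X) ET expand_lin addrC -big_split.
apply: eq_bigr => i _; rewrite -big_split; apply: eq_bigr => j _.
by rewrite !mxE scalerDl.
Qed.
Lemma trace_zero n (Y : 'M[C]_n) : (forall X, \tr (Y *m X) = 0) -> Y = 0.
Proof.
move=> H; apply/matrixP => i j; rewrite mxE.
have := H (delta_mx j i); rewrite /mxtrace (bigD1 i) //= big1 => [|k /negbTE ki].
  rewrite mxE (bigD1 j) //= big1 => [|l /negbTE lj]; last by rewrite mxE lj mulr0.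
  by rewrite mxE !eqxx mulr1 !addr0.
rewrite mxE big1 // => l _; by rewrite mxE ki andbF mulr0.
Qed.
Lemma extreme_aux r m n (f : 'I_r -> 'M[C]_(m,n)) (A : 'M[C]_n) (B : 'M[C]_m)
    (Phi1 Phi2 : 'M[C]_n -> 'M[C]_m) t :
  indep2 f -> CPset A B (krausmap (kseq f)) -> CPset A B Phi1 -> is_CP Phi2 ->
  0 < t -> 0 < 1 - t ->
  (forall X, krausmap (kseq f) X = t *: Phi1 X + (1 - t) *: Phi2 X) ->
  forall X, Phi1 X = krausmap (kseq f) X.
Proof.
move=> ind [_ [PhiB PhiA]] [[L1 E1] [P1B P1A]] [L2 E2] t0 t1 Hdec.
have span : forall M, M \in L1 -> exists c : 'I_r -> C, M = \sum_i c i *: f i.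
  move=> M ML; apply: span_of_orth => w Hw.
  have q0 : qf w (krausmap (kseq f)) = 0.
    by rewrite qf_kraus /kseq big_map big1 // => i _; rewrite Hw mul0r.
  have : qf w (krausmap (kseq f)) = t * qf w (krausmap L1) + (1 - t) * qf w (krausmap L2).
    by rewrite -qf_lin; apply: eq_qf => X; rewrite Hdec E1 E2.
  have ge0 : forall L, 0 <= qf w (krausmap L).
    by move=> L; rewrite qf_kraus; apply: sumr_ge0 => N _; apply: mul_conjC_ge0.
  rewrite q0 => /esym/eqP; rewrite paddr_eq0; last 2 first.
  - by apply: mulr_ge0; [apply: ltW | apply: ge0].
  - by apply: mulr_ge0; [apply: ltW | apply: ge0].
  case/andP; rewrite mulf_eq0 (gt_eqF t0) /= qf_kraus psumr_eq0; last first.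
    by move=> N _; apply: mul_conjC_ge0.
  by move=> /allP /(_ M ML) /=; rewrite mulf_eq0 conjC_eq0 orbb => /eqP ->.
have [T ET] := kraus_in_span span.
pose S := T - 1%:M.
have diff : forall X, Phi1 X - krausmap (kseq f) X
    = \sum_i \sum_j S i j *: (f i *m X *m adjmx (f j)).
  move=> X; rewrite E1 ET krausmapE -sumrB; apply: eq_bigr => i _.
  rewrite -(sum_delta1 (fun j => f i *m X *m adjmx (f j)) i) -sumrB; apply: eq_bigr => j _.
  by rewrite !mxE scalerBl.
have eq1 : \sum_i \sum_j S i j *: (f i *m adjmx (f j)) = 0.
  have := diff 1%:M; rewrite P1B PhiB subrr => E; rewrite [RHS]E.
  by apply: eq_bigr => i _; apply: eq_bigr => j _; rewrite mulmx1.
have eq2 : \sum_i \sum_j S i j *: (adjmx (f j) *m f i) = 0.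
  apply: trace_zero => X.
  have h : \tr (Phi1 X) = \tr (krausmap (kseq f) X).
    by have := P1A X; rewrite -PhiA adjmx1 !mul1mx.
  have : \tr (Phi1 X - krausmap (kseq f) X) = 0 by rewrite raddfB /= h subrr.
  rewrite diff => E; apply: (etrans _ E).
  rewrite mulmx_suml !raddf_sum; apply: eq_bigr => i _.
  rewrite mulmx_suml !raddf_sum; apply: eq_bigr => j _.
  by rewrite -scalemxAl /= !mxtraceZ [in RHS]mxtrace_mulC mulmxA.
have S0 := ind S eq1 eq2.
move=> X; apply/eqP; rewrite -subr_eq0 diff; apply/eqP.
by apply: big1 => i _; apply: big1 => j _; rewrite S0 mxE scale0r.
Qed.
Theorem extreme_kraus r m n (f : 'I_r -> 'M[C]_(m,n)) (A : 'M[C]_n) (B : 'M[C]_m) :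
  indep2 f -> CPset A B (krausmap (kseq f)) ->
  extreme_point (CPset A B) (krausmap (kseq f)).
Proof.
move=> ind H; split => //.
case=> t [P1 [P2 [/andP [t0 t1] S1 S2 neq dec]]].
have t1' : 0 < 1 - t by rewrite subr_gt0.
have e1 := extreme_aux ind H S1 (proj1 S2) t0 t1' dec.
have e11 : 1 - (1 - t) = t by ring.
have t0' : 0 < 1 - (1 - t) by rewrite e11.
have dec' : forall X, krausmap (kseq f) X = (1 - t) *: P2 X + (1 - (1 - t)) *: P1 X.
  by move=> X; rewrite dec e11 addrC.
have e2 := extreme_aux ind H S2 (proj1 S1) t1' t0' dec'.
by apply: neq; apply: functional_extensionality => X; rewrite e1 e2.
Qed.
End Extreme.
From mathcomp Require Import ring.
Arguments mxtens_index {m n}.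
Arguments mxtens_unindex {m n}.
Section Tensor.
Variable C : numClosedFieldType.
Definition indepL r m n (f : 'I_r -> 'M[C]_(m,n)) := forall S : 'M[C]_r,
  \sum_i \sum_j S i j *: (f i *m adjmx (f j)) = 0 -> S = 0.
Definition indepR r m n (f : 'I_r -> 'M[C]_(m,n)) := forall S : 'M[C]_r,
  \sum_i \sum_j S i j *: (adjmx (f j) *m f i) = 0 -> S = 0.
Definition tfam r1 r2 m1 n1 m2 n2 (A : 'I_r1 -> 'M[C]_(m1,n1)) (B : 'I_r2 -> 'M[C]_(m2,n2))
  : 'I_(r1 * r2) -> 'M[C]_(m1 * m2, n1 * n2) :=
  fun x => A (mxtens_unindex x).1 *t B (mxtens_unindex x).2.
Lemma sum_tidx (V : nmodType) r1 r2 (F : 'I_(r1 * r2) -> V) :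
  \sum_x F x = \sum_i \sum_j F (mxtens_index (i, j)).
Proof.
rewrite pair_big /= (reindex (@mxtens_index r1 r2)) /=; last first.
  by exists mxtens_unindex => x _; rewrite ?mxtens_indexK ?mxtens_unindexK.
by apply: eq_bigr => -[i j].
Qed.
Lemma adjmx_tens m1 n1 m2 n2 (A : 'M[C]_(m1,n1)) (B : 'M[C]_(m2,n2)) :
  adjmx (A *t B) = adjmx A *t adjmx B.
Proof.
apply/matrixP => x y; case: (mxtens_indexP x) => i j; case: (mxtens_indexP y) => k l.
by rewrite adjmxE !tensmxE !adjmxE rmorphM.
Qed.
Lemma tens1mx m n : (1%:M : 'M[C]_m) *t (1%:M : 'M[C]_n) = 1%:M.
Proof.
apply/matrixP => x y; case: (mxtens_indexP x) => i j; case: (mxtens_indexP y) => k l.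
rewrite tensmxE !mxE (inj_eq (can_inj (@mxtens_indexK m n))) xpair_eqE.
by case: (i == k); case: (j == l); rewrite ?mulr1 ?mulr0.
Qed.
Lemma tfam_prod1 r1 r2 m1 n1 m2 n2 (A : 'I_r1 -> 'M[C]_(m1,n1)) (B : 'I_r2 -> 'M[C]_(m2,n2)) x y :
  tfam A B x *m adjmx (tfam A B y)
  = (A (mxtens_unindex x).1 *m adjmx (A (mxtens_unindex y).1))
     *t (B (mxtens_unindex x).2 *m adjmx (B (mxtens_unindex y).2)).
Proof. by rewrite /tfam adjmx_tens tensmx_mul. Qed.
Lemma tfam_prod2 r1 r2 m1 n1 m2 n2 (A : 'I_r1 -> 'M[C]_(m1,n1)) (B : 'I_r2 -> 'M[C]_(m2,n2)) x y :
  adjmx (tfam A B y) *m tfam A B x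
  = (adjmx (A (mxtens_unindex y).1) *m A (mxtens_unindex x).1)
     *t (adjmx (B (mxtens_unindex y).2) *m B (mxtens_unindex x).2).
Proof. by rewrite /tfam adjmx_tens tensmx_mul. Qed.
Definition marg1 r m n (f : 'I_r -> 'M[C]_(m,n)) := \sum_i f i *m adjmx (f i).
Definition marg2 r m n (f : 'I_r -> 'M[C]_(m,n)) := \sum_i adjmx (f i) *m f i.
Lemma tsum_entry r1 r2 m1 n1 m2 n2 (P : 'I_r1 -> 'I_r1 -> 'M[C]_(m1,n1))
   (Q : 'I_r2 -> 'I_r2 -> 'M[C]_(m2,n2)) (S : 'M[C]_(r1 * r2)) p u q v :
  (\sum_x \sum_y S x y *: (P (mxtens_unindex x).1 (mxtens_unindex y).1
                          *t Q (mxtens_unindex x).2 (mxtens_unindex y).2))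
     (mxtens_index (p, u)) (mxtens_index (q, v))
  = \sum_i \sum_i' (\sum_j \sum_j' S (mxtens_index (i, j)) (mxtens_index (i', j'))
                      * Q j j' u v) * P i i' p q.
Proof.
rewrite summxE sum_tidx; apply: eq_bigr => i _.
have E : forall j,
  (\sum_y S (mxtens_index (i, j)) y *: (P (mxtens_unindex (mxtens_index (i, j))).1 (mxtens_unindex y).1
                          *t Q (mxtens_unindex (mxtens_index (i, j))).2 (mxtens_unindex y).2))
     (mxtens_index (p, u)) (mxtens_index (q, v))
  = \sum_i' \sum_j' S (mxtens_index (i, j)) (mxtens_index (i', j')) * (P i i' p q * Q j j' u v).
  move=> j; rewrite summxE sum_tidx; apply: eq_bigr => i' _; apply: eq_bigr => j' _.
  by rewrite mxE !mxtens_indexK tensmxE.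
under eq_bigr do rewrite E.
rewrite exchange_big; apply: eq_bigr => i' _; rewrite mulr_suml; apply: eq_bigr => j _.
rewrite mulr_suml; apply: eq_bigr => j' _; ring.
Qed.
Lemma sum4 (I J : finType) (F : I -> I -> J -> J -> C) :
  \sum_i \sum_i' \sum_j \sum_j' F i i' j j' = \sum_j \sum_j' \sum_i \sum_i' F i i' j j'.
Proof.
rewrite pair_big [RHS]pair_big.
under eq_bigr do rewrite pair_big.
under [RHS]eq_bigr do rewrite pair_big.
exact: exchange_big.
Qed.
Lemma tsum_entry' r1 r2 m1 n1 m2 n2 (P : 'I_r1 -> 'I_r1 -> 'M[C]_(m1,n1))
   (Q : 'I_r2 -> 'I_r2 -> 'M[C]_(m2,n2)) (S : 'M[C]_(r1 * r2)) p u q v :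
  (\sum_x \sum_y S x y *: (P (mxtens_unindex x).1 (mxtens_unindex y).1
                          *t Q (mxtens_unindex x).2 (mxtens_unindex y).2))
     (mxtens_index (p, u)) (mxtens_index (q, v))
  = \sum_j \sum_j' (\sum_i \sum_i' S (mxtens_index (i, j)) (mxtens_index (i', j'))
                      * P i i' p q) * Q j j' u v.
Proof.
rewrite tsum_entry.
transitivity (\sum_i \sum_i' \sum_j \sum_j'
   S (mxtens_index (i, j)) (mxtens_index (i', j')) * Q j j' u v * P i i' p q).
  apply: eq_bigr => i _; apply: eq_bigr => i' _; rewrite mulr_suml.
  by apply: eq_bigr => j _; rewrite mulr_suml.
rewrite sum4; apply: eq_bigr => j _; apply: eq_bigr => j' _; rewrite mulr_suml.
apply: eq_bigr => i _; rewrite mulr_suml; apply: eq_bigr => i' _; ring.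
Qed.
Lemma indep2_tensL r1 r2 m1 n1 m2 n2 (A : 'I_r1 -> 'M[C]_(m1,n1)) (B : 'I_r2 -> 'M[C]_(m2,n2)) :
  indepL A -> indepR A -> indep2 B -> indep2 (tfam A B).
Proof.
move=> hL hR h2 S H1 H2.
have G1 : forall i i', \sum_j \sum_j' S (mxtens_index (i, j)) (mxtens_index (i', j'))
            *: (B j *m adjmx (B j')) = 0.
  have E1 : \sum_x \sum_y S x y *: ((fun i i' => A i *m adjmx (A i')) (mxtens_unindex x).1 (mxtens_unindex y).1
           *t (fun j j' => B j *m adjmx (B j')) (mxtens_unindex x).2 (mxtens_unindex y).2) = 0.
    by rewrite -[RHS]H1; apply: eq_bigr => x _; apply: eq_bigr => y _; rewrite tfam_prod1.
  have K : forall u v, (\matrix_(i, i') \sum_j \sum_j' S (mxtens_index (i, j)) (mxtens_index (i', j'))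
             * (B j *m adjmx (B j')) u v : 'M[C]_r1) = 0.
    move=> u v; apply: hL; apply/matrixP => p q.
    have E := congr1 (fun M : 'M[C]_(m1 * m2) => M (mxtens_index (p, u)) (mxtens_index (q, v))) E1.
    rewrite /= (tsum_entry (fun i i' => A i *m adjmx (A i')) (fun j j' => B j *m adjmx (B j'))) mxE in E.
    rewrite [RHS]mxE -[RHS]E summxE; apply: eq_bigr => i _.
    by rewrite summxE; apply: eq_bigr => i' _; rewrite !mxE.
  move=> i i'; apply/matrixP => u v; have E := congr1 (fun M : 'M[C]_r1 => M i i') (K u v).
  rewrite /= !mxE in E; rewrite [RHS]mxE -[RHS]E summxE; apply: eq_bigr => j _.
  by rewrite summxE; apply: eq_bigr => j' _; rewrite !mxE.
have G2 : forall i i', \sum_j \sum_j' S (mxtens_index (i, j)) (mxtens_index (i', j'))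
            *: (adjmx (B j') *m B j) = 0.
  have E2 : \sum_x \sum_y S x y *: ((fun i i' => adjmx (A i') *m A i) (mxtens_unindex x).1 (mxtens_unindex y).1
           *t (fun j j' => adjmx (B j') *m B j) (mxtens_unindex x).2 (mxtens_unindex y).2) = 0.
    by rewrite -[RHS]H2; apply: eq_bigr => x _; apply: eq_bigr => y _; rewrite tfam_prod2.
  have K : forall u v, (\matrix_(i, i') \sum_j \sum_j' S (mxtens_index (i, j)) (mxtens_index (i', j'))
             * (adjmx (B j') *m B j) u v : 'M[C]_r1) = 0.
    move=> u v; apply: hR; apply/matrixP => p q.
    have E := congr1 (fun M : 'M[C]_(n1 * n2) => M (mxtens_index (p, u)) (mxtens_index (q, v))) E2.
    rewrite /= (tsum_entry (fun i i' => adjmx (A i') *m A i) (fun j j' => adjmx (B j') *m B j)) mxE in E.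
    rewrite [RHS]mxE -[RHS]E summxE; apply: eq_bigr => i _.
    by rewrite summxE; apply: eq_bigr => i' _; rewrite !mxE.
  move=> i i'; apply/matrixP => u v; have E := congr1 (fun M : 'M[C]_r1 => M i i') (K u v).
  rewrite /= !mxE in E; rewrite [RHS]mxE -[RHS]E summxE; apply: eq_bigr => j _.
  by rewrite summxE; apply: eq_bigr => j' _; rewrite !mxE.
apply/matrixP => x y; case: (mxtens_indexP x) => i j; case: (mxtens_indexP y) => i' j'.
have := h2 (\matrix_(j, j') S (mxtens_index (i, j)) (mxtens_index (i', j'))).
move=> /(_ _ _)/(congr1 (fun M : 'M[C]_r2 => M j j')); rewrite !mxE; apply.
  by rewrite -[RHS](G1 i i'); apply: eq_bigr => a _; apply: eq_bigr => b _; rewrite mxE.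
by rewrite -[RHS](G2 i i'); apply: eq_bigr => a _; apply: eq_bigr => b _; rewrite mxE.
Qed.
Lemma indep2_tensR r1 r2 m1 n1 m2 n2 (A : 'I_r1 -> 'M[C]_(m1,n1)) (B : 'I_r2 -> 'M[C]_(m2,n2)) :
  indep2 A -> indepL B -> indepR B -> indep2 (tfam A B).
Proof.
move=> h2 hL hR S H1 H2.
have G1 : forall j j', \sum_i \sum_i' S (mxtens_index (i, j)) (mxtens_index (i', j'))
            *: (A i *m adjmx (A i')) = 0.
  have E1 : \sum_x \sum_y S x y *: ((fun i i' => A i *m adjmx (A i')) (mxtens_unindex x).1 (mxtens_unindex y).1
           *t (fun j j' => B j *m adjmx (B j')) (mxtens_unindex x).2 (mxtens_unindex y).2) = 0.
    by rewrite -[RHS]H1; apply: eq_bigr => x _; apply: eq_bigr => y _; rewrite tfam_prod1.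
  have K : forall p q, (\matrix_(j, j') \sum_i \sum_i' S (mxtens_index (i, j)) (mxtens_index (i', j'))
             * (A i *m adjmx (A i')) p q : 'M[C]_r2) = 0.
    move=> p q; apply: hL; apply/matrixP => u v.
    have E := congr1 (fun M : 'M[C]_(m1 * m2) => M (mxtens_index (p, u)) (mxtens_index (q, v))) E1.
    rewrite /= (tsum_entry' (fun i i' => A i *m adjmx (A i')) (fun j j' => B j *m adjmx (B j'))) mxE in E.
    rewrite [RHS]mxE -[RHS]E summxE; apply: eq_bigr => i _.
    by rewrite summxE; apply: eq_bigr => i' _; rewrite !mxE.
  move=> j j'; apply/matrixP => p q; have E := congr1 (fun M : 'M[C]_r2 => M j j') (K p q).
  rewrite /= !mxE in E; rewrite [RHS]mxE -[RHS]E summxE; apply: eq_bigr => i _.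
  by rewrite summxE; apply: eq_bigr => i' _; rewrite !mxE.
have G2 : forall j j', \sum_i \sum_i' S (mxtens_index (i, j)) (mxtens_index (i', j'))
            *: (adjmx (A i') *m A i) = 0.
  have E2 : \sum_x \sum_y S x y *: ((fun i i' => adjmx (A i') *m A i) (mxtens_unindex x).1 (mxtens_unindex y).1
           *t (fun j j' => adjmx (B j') *m B j) (mxtens_unindex x).2 (mxtens_unindex y).2) = 0.
    by rewrite -[RHS]H2; apply: eq_bigr => x _; apply: eq_bigr => y _; rewrite tfam_prod2.
  have K : forall p q, (\matrix_(j, j') \sum_i \sum_i' S (mxtens_index (i, j)) (mxtens_index (i', j'))
             * (adjmx (A i') *m A i) p q : 'M[C]_r2) = 0.
    move=> p q; apply: hR; apply/matrixP => u v.
    have E := congr1 (fun M : 'M[C]_(n1 * n2) => M (mxtens_index (p, u)) (mxtens_index (q, v))) E2.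
    rewrite /= (tsum_entry' (fun i i' => adjmx (A i') *m A i) (fun j j' => adjmx (B j') *m B j)) mxE in E.
    rewrite [RHS]mxE -[RHS]E summxE; apply: eq_bigr => i _.
    by rewrite summxE; apply: eq_bigr => i' _; rewrite !mxE.
  move=> j j'; apply/matrixP => p q; have E := congr1 (fun M : 'M[C]_r2 => M j j') (K p q).
  rewrite /= !mxE in E; rewrite [RHS]mxE -[RHS]E summxE; apply: eq_bigr => i _.
  by rewrite summxE; apply: eq_bigr => i' _; rewrite !mxE.
apply/matrixP => x y; case: (mxtens_indexP x) => i j; case: (mxtens_indexP y) => i' j'.
have := h2 (\matrix_(i, i') S (mxtens_index (i, j)) (mxtens_index (i', j'))).
move=> /(_ _ _)/(congr1 (fun M : 'M[C]_r1 => M i i')); rewrite !mxE; apply.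
  by rewrite -[RHS](G1 j j'); apply: eq_bigr => a _; apply: eq_bigr => b _; rewrite mxE.
by rewrite -[RHS](G2 j j'); apply: eq_bigr => a _; apply: eq_bigr => b _; rewrite mxE.
Qed.
Lemma marg1_tens r1 r2 m1 n1 m2 n2 (A : 'I_r1 -> 'M[C]_(m1,n1)) (B : 'I_r2 -> 'M[C]_(m2,n2)) :
  marg1 (tfam A B) = marg1 A *t marg1 B.
Proof.
apply/matrixP => x y; case: (mxtens_indexP x) => p u; case: (mxtens_indexP y) => q v.
rewrite tensmxE !summxE mulr_sum; apply: eq_bigr => z _.
by rewrite tfam_prod1 tensmxE.
Qed.
Lemma marg2_tens r1 r2 m1 n1 m2 n2 (A : 'I_r1 -> 'M[C]_(m1,n1)) (B : 'I_r2 -> 'M[C]_(m2,n2)) :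
  marg2 (tfam A B) = marg2 A *t marg2 B.
Proof.
apply/matrixP => x y; case: (mxtens_indexP x) => p u; case: (mxtens_indexP y) => q v.
rewrite tensmxE !summxE mulr_sum; apply: eq_bigr => z _.
by rewrite tfam_prod2 tensmxE.
Qed.
End Tensor.
From mathcomp Require Import ring.
Arguments mxtens_index {m n}.
Arguments mxtens_unindex {m n}.
Section Choi.
Variable C : numClosedFieldType.
Definition sfam r m n (mu : C) (f : 'I_r -> 'M[C]_(m,n)) := fun i => mu *: f i.
Lemma indep2_scale r m n (mu : C) (f : 'I_r -> 'M[C]_(m,n)) :
  mu != 0 -> indep2 f -> indep2 (sfam mu f).
Proof.
move=> mu0 h S H1 H2; have nz : mu * mu^* != 0 by rewrite mulf_neq0 ?conjC_eq0.
apply: h.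
  have E : (mu * mu^*) *: (\sum_i \sum_j S i j *: (f i *m adjmx (f j))) = 0.
    rewrite scaler_sumr -[RHS]H1; apply: eq_bigr => i _; rewrite scaler_sumr; apply: eq_bigr => j _.
    by rewrite /sfam adjmxZ -scalemxAl -scalemxAr !scalerA; congr (_ *: _); ring.
  by move/eqP: E; rewrite scaler_eq0 (negbTE nz) => /eqP.
have E : (mu * mu^*) *: (\sum_i \sum_j S i j *: (adjmx (f j) *m f i)) = 0.
  rewrite scaler_sumr -[RHS]H2; apply: eq_bigr => i _; rewrite scaler_sumr; apply: eq_bigr => j _.
  by rewrite /sfam adjmxZ -scalemxAl -scalemxAr !scalerA; congr (_ *: _); ring.
by move/eqP: E; rewrite scaler_eq0 (negbTE nz) => /eqP.
Qed.
Lemma marg1_scale r m n (mu : C) (f : 'I_r -> 'M[C]_(m,n)) :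
  marg1 (sfam mu f) = (mu * mu^*) *: marg1 f.
Proof.
rewrite /marg1 scaler_sumr; apply: eq_bigr => i _.
by rewrite /sfam adjmxZ -scalemxAl -scalemxAr scalerA.
Qed.
Lemma marg2_scale r m n (mu : C) (f : 'I_r -> 'M[C]_(m,n)) :
  marg2 (sfam mu f) = (mu * mu^*) *: marg2 f.
Proof.
rewrite /marg2 scaler_sumr; apply: eq_bigr => i _.
by rewrite /sfam adjmxZ -scalemxAl -scalemxAr scalerA mulrC.
Qed.
Lemma indep2_free r m n (f : 'I_r -> 'M[C]_(m,n)) :
  indep2 f -> forall c : 'I_r -> C, \sum_i c i *: f i = 0 -> forall i, c i = 0.
Proof.
move=> h c Hc i.
have S0 : (\matrix_(i, j) (c i * (c j)^*) : 'M[C]_r) = 0.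
  apply: h.
    have := expand_lin f c 1%:M; rewrite Hc !mul0mx => /esym E.
    rewrite -[RHS]E; apply: eq_bigr => a _; apply: eq_bigr => b _; by rewrite mxE mulmx1.
  have := expand_lin2 f c; rewrite Hc mulmx0 => /esym E.
  rewrite -[RHS]E; apply: eq_bigr => a _; apply: eq_bigr => b _; by rewrite mxE.
have := congr1 (fun M : 'M[C]_r => M i i) S0; rewrite /= !mxE.
by move=> /eqP; rewrite mulf_eq0 conjC_eq0 orbb => /eqP.
Qed.
Lemma norm_row_eq0 n (y : 'rV[C]_n) : (y *m adjmx y) 0 0 = 0 -> y = 0.
Proof.
rewrite mxE => /eqP; rewrite psumr_eq0; last by move=> k _; rewrite adjmxE; apply: mul_conjC_ge0.
move=> /allP H; apply/rowP => k; have := H k (mem_index_enum k); rewrite /= adjmxE.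
by rewrite mulf_eq0 conjC_eq0 orbb mxE => /eqP.
Qed.
Definition choiV r m n (f : 'I_r -> 'M[C]_(m,n)) : 'M[C]_(n * m, r) :=
  \matrix_(x, i) f i (mxtens_unindex x).2 (mxtens_unindex x).1.
Lemma choiE r m n (f : 'I_r -> 'M[C]_(m,n)) :
  choi (krausmap (kseq f)) = choiV f *m adjmx (choiV f).
Proof.
apply/matrixP => x y; case: (mxtens_indexP x) => s a; case: (mxtens_indexP y) => s' a'.
rewrite summxE (bigD1 s) //= [X in _ + X]big1 => [|r0 /negbTE rs]; last first.
  by rewrite summxE big1 // => s0 _; rewrite tensmxE mxE (eq_sym s) rs mul0r.
rewrite addr0 summxE (bigD1 s') //= [X in _ + X]big1 => [|s0 /negbTE ss]; last first.
  by rewrite tensmxE mxE (eq_sym s') ss andbF mul0r.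
rewrite tensmxE mxE !eqxx mul1r addr0 krausmapE summxE mxE.
apply: eq_bigr => i _; rewrite sandw_delta adjmxE !mxE !mxtens_indexK //.
Qed.
Lemma choi_rank_free r m n (f : 'I_r -> 'M[C]_(m,n)) :
  (forall c : 'I_r -> C, \sum_i c i *: f i = 0 -> forall i, c i = 0) ->
  choi_rank (krausmap (kseq f)) = r.
Proof.
move=> fr; rewrite /choi_rank choiE; set V := choiV f.
have Gu : adjmx V *m V \in unitmx.
  rewrite -row_free_unit -kermx_eq0; apply/eqP/row_matrixP => k; rewrite row0.
  set x := row k (kermx (adjmx V *m V)).
  have xG : x *m (adjmx V *m V) = 0 by rewrite /x -row_mul mulmx_ker row0.
  set y := x *m adjmx V.
  have y0 : y = 0.
    apply: norm_row_eq0; rewrite /y adjmxM adjmxK -!mulmxA (mulmxA (adjmx V)) (mulmxA x) xG.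
    by rewrite mul0mx mxE.
  have c0 := fr (fun i => (x 0 i)^*).
  apply/rowP => i; rewrite [RHS]mxE; apply/eqP; rewrite -conjC_eq0; apply/eqP; apply: c0.
  apply/matrixP => a s; have := congr1 (fun M : 'rV[C]_(n * m) => M 0 (mxtens_index (s, a))) y0.
  rewrite /= /y !mxE => E; rewrite -[RHS]conjC0 -E rmorph_sum summxE; apply: eq_bigr => j _.
  by rewrite [LHS]mxE rmorphM /= adjmxE conjCK /V /choiV mxE mxtens_indexK.
apply/eqP; rewrite eqn_leq; apply/andP; split.
  by apply: leq_trans (mxrankM_maxl _ _) (rank_leq_col _).
have U2 : (adjmx V *m V) *m (adjmx V *m V) \in unitmx by rewrite unitmx_mul Gu.
rewrite -{1}(mxrank_unit U2).
rewrite -mulmxA (mulmxA V) mulmxA.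
by apply: leq_trans (mxrankM_maxl _ _) (mxrankM_maxr _ _).
Qed.
End Choi.
Section ThetaK.
Variable C : numClosedFieldType.
Variable k : nat.
Definition alpha : C := - (k.+2)%:R.
Definition thk (b : 'I_k) : 'M[C]_k :=
  \matrix_(p, q) (2 * (p == b)%:R + (q == b)%:R * (alpha * (p == b)%:R + 2)).
Lemma thk_sym b p q : thk b p q = thk b q p.
Proof. by rewrite !mxE; case: (p == b); case: (q == b); rewrite /=; ring. Qed.
Lemma thk_conj b p q : (thk b p q)^* = thk b p q.
Proof. by apply: conj_Creal; rewrite !mxE /alpha ?(realn, rpred1, rpredN, rpredM, rpredD). Qed.
Lemma adj_thk b : adjmx (thk b) = thk b.
Proof. by apply/matrixP => p q; rewrite adjmxE thk_conj thk_sym. Qed.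
Lemma sum_indl (G : 'I_k -> C) p : \sum_b (p == b)%:R * G b = G p.
Proof.
rewrite (bigD1 p) //= big1 => [|b /negbTE pb]; first by rewrite eqxx mul1r addr0.
by rewrite eq_sym pb mul0r.
Qed.
Lemma sum_indr (G : 'I_k -> C) p : \sum_b (b == p)%:R * G b = G p.
Proof. by rewrite -[RHS](sum_indl G p); apply: eq_bigr => b _; rewrite eq_sym. Qed.
Lemma sumy (U V W Z : C) b d :
  \sum_(y < k) (U + (y == b)%:R * V) * (W + (y == d)%:R * Z)
  = k%:R * U * W + U * Z + V * W + (b == d)%:R * V * Z.
Proof.
rewrite (eq_bigr (fun y => U * W + (y == d)%:R * (U * Z) + (y == b)%:R * (V * W)
           + (y == b)%:R * ((y == d)%:R * (V * Z)))); last by move=> y _; ring.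
rewrite !big_split /= sumr_const card_ord !sum_indr -mulr_natl; ring.
Qed.
Lemma prodE b d p q : (thk b *m thk d) p q =
  k%:R * (2 * (p == b)%:R) * (2 * (q == d)%:R) + (2 * (p == b)%:R) * (alpha * (q == d)%:R + 2)
  + (alpha * (p == b)%:R + 2) * (2 * (q == d)%:R)
  + (b == d)%:R * (alpha * (p == b)%:R + 2) * (alpha * (q == d)%:R + 2).
Proof.
rewrite mxE -sumy; apply: eq_bigr => y _.
by rewrite [thk d y q]thk_sym !mxE.
Qed.
Lemma Mform (S : 'M[C]_k) p q :
  (\sum_b \sum_d S b d *: (thk b *m adjmx (thk d))) p q =
  (4 * k%:R + 4 * alpha) * S p q + 4 * (\sum_d S p d) + 4 * (\sum_b S b q)
  + alpha ^+ 2 * ((q == p)%:R * S p p) + 2 * alpha * S p p + 2 * alpha * S q q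
  + 4 * (\sum_b S b b).
Proof.
rewrite summxE.
transitivity (\sum_b ((4 * k%:R + 4 * alpha) * ((p == b)%:R * \sum_d (q == d)%:R * S b d)
   + 4 * ((p == b)%:R * \sum_d S b d) + 4 * \sum_d (q == d)%:R * S b d
   + \sum_d (b == d)%:R * (S b d * ((alpha * (p == b)%:R + 2) * (alpha * (q == d)%:R + 2))))).
  apply: eq_bigr => b _; rewrite summxE !mulr_sumr -!big_split /=.
  by apply: eq_bigr => d _; rewrite mxE adj_thk prodE; ring.
under eq_bigr => b _ do rewrite !sum_indl.
transitivity (\sum_b ((4 * k%:R + 4 * alpha) * ((p == b)%:R * S b q)
   + 4 * ((p == b)%:R * \sum_d S b d) + 4 * S b q
   + alpha ^+ 2 * ((p == b)%:R * ((q == b)%:R * S b b))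
   + 2 * alpha * ((p == b)%:R * S b b) + 2 * alpha * ((q == b)%:R * S b b)
   + 4 * S b b)).
  by apply: eq_bigr => b _; ring.
rewrite !big_split /= -!mulr_sumr !sum_indl; ring.
Qed.
Lemma lincomb3 (x e1 e2 e3 c1 c2 c3 : C) :
  e1 = 0 -> e2 = 0 -> e3 = 0 -> x = c1 * e1 + c2 * e2 + c3 * e3 -> x = 0.
Proof. by move=> -> -> -> ->; rewrite !mulr0 !addr0. Qed.
Lemma lincomb2 (x e1 e2 c1 c2 : C) :
  e1 = 0 -> e2 = 0 -> x = c1 * e1 + c2 * e2 -> x = 0.
Proof. by move=> -> -> ->; rewrite !mulr0 !addr0. Qed.
Lemma lincomb1 (x e1 c1 : C) : e1 = 0 -> x = c1 * e1 -> x = 0.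
Proof. by move=> -> ->; rewrite !mulr0. Qed.
Lemma natr_neq0 n : (0 < n)%N -> (n%:R : C) != 0.
Proof. by rewrite pnatr_eq0 -lt0n. Qed.
Lemma alphaE : alpha = - (k%:R + 2).
Proof. by rewrite /alpha -addn2 natrD. Qed.
Lemma indepL_thk : (3 <= k)%N -> indepL thk.
Proof.
move=> hk S H.
have E : forall p q, (4 * k%:R + 4 * alpha) * S p q + 4 * (\sum_d S p d) + 4 * (\sum_b S b q)
  + alpha ^+ 2 * ((q == p)%:R * S p p) + 2 * alpha * S p p + 2 * alpha * S q q
  + 4 * (\sum_b S b b) = 0.
  move=> p q; have := congr1 (fun M : 'M[C]_k => M p q) H.
  by rewrite /= Mform mxE.
have I1 : forall p, (4 * k%:R + 4 * alpha) * (\sum_q S p q) + k%:R * (4 * (\sum_d S p d))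
    + 4 * (\sum_q \sum_b S b q)
    + alpha ^+ 2 * S p p + k%:R * (2 * alpha * S p p) + 2 * alpha * (\sum_q S q q)
    + k%:R * (4 * (\sum_b S b b)) = 0.
  move=> p; have h : \sum_q ((4 * k%:R + 4 * alpha) * S p q + 4 * (\sum_d S p d) + 4 * (\sum_b S b q)
  + alpha ^+ 2 * ((q == p)%:R * S p p) + 2 * alpha * S p p + 2 * alpha * S q q
  + 4 * (\sum_b S b b)) = 0 by apply: big1 => q _; exact: E.
  rewrite -[RHS]h !big_split /= -!mulr_sumr sum_indr !sumr_const card_ord; ring.
have I2 : forall q, (4 * k%:R + 4 * alpha) * (\sum_p S p q) + 4 * (\sum_p \sum_d S p d)
    + k%:R * (4 * (\sum_b S b q))
    + alpha ^+ 2 * S q q + k%:R * (2 * alpha * S q q) + 2 * alpha * (\sum_p S p p)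
    + k%:R * (4 * (\sum_b S b b)) = 0.
  move=> q; have h : \sum_p ((4 * k%:R + 4 * alpha) * S p q + 4 * (\sum_d S p d) + 4 * (\sum_b S b q)
  + alpha ^+ 2 * ((q == p)%:R * S p p) + 2 * alpha * S p p + 2 * alpha * S q q
  + 4 * (\sum_b S b b)) = 0 by apply: big1 => p _; exact: E.
  rewrite -[RHS]h !big_split /= -!mulr_sumr sum_indl !sumr_const card_ord; ring.
have Sig : \sum_p \sum_d S p d = \sum_q \sum_b S b q by rewrite exchange_big.
have k0 : (0 < k)%N by apply: leq_trans hk.
pose i0 : 'I_k := Ordinal k0.
have nK : (k%:R : C) != 0 by rewrite natr_neq0.
have nK2 : (k%:R - 2 : C) != 0.
  by rewrite -(natrB _ (ltnW hk)) natr_neq0 // subn_gt0.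
have nX : ((k%:R - 2) ^+ 2 * (k%:R + 4) : C) != 0.
  rewrite mulf_neq0 ?expf_neq0 // -natrD natr_neq0 //; lia.
have Sp : forall p, (k%:R - 2) ^+ 2 * (k%:R + 4) * S p p - 8 * (\sum_q \sum_b S b q) = 0.
  move=> p; have Epp := E p p; rewrite eqxx mul1r in Epp.
  have I2p := I2 p; rewrite Sig in I2p.
  apply: (lincomb3 (c1 := -1) (c2 := -1) (c3 := k%:R - 2) (I1 p) I2p Epp).
  rewrite alphaE; ring.
have Sc : forall p, S p p = S i0 i0.
  move=> p; apply: (mulfI nX); apply/eqP; rewrite -subr_eq0; apply/eqP.
  by apply: (lincomb2 (c1 := 1) (c2 := -1) (Sp p) (Sp i0)); ring.
have n8 : (8 : C) != 0 by rewrite natr_neq0.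
have n4K : (4 * k%:R - 8 : C) != 0.
  by rewrite (_ : 4 * k%:R - 8 = 4 * (k%:R - 2)); [rewrite mulf_neq0 // natr_neq0 | ring].
have Rc : forall p, \sum_d S p d = \sum_d S i0 d.
  move=> p; apply/eqP; rewrite -subr_eq0; apply/eqP.
  have h : (4 * k%:R - 8) * (\sum_d S p d - \sum_d S i0 d) = 0.
    have h1 := I1 p; have h2 := I1 i0; rewrite (Sc p) in h1.
    by apply: (lincomb2 (c1 := 1) (c2 := -1) h1 h2); rewrite alphaE; ring.
  by move/eqP: h; rewrite mulf_eq0 (negbTE n4K) => /eqP.
have Cc : forall q, \sum_b S b q = \sum_b S b i0.
  move=> q; apply/eqP; rewrite -subr_eq0; apply/eqP.
  have h : (4 * k%:R - 8) * (\sum_b S b q - \sum_b S b i0) = 0.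
    have h1 := I2 q; have h2 := I2 i0; rewrite (Sc q) in h1.
    by apply: (lincomb2 (c1 := 1) (c2 := -1) h1 h2); rewrite alphaE; ring.
  by move/eqP: h; rewrite mulf_eq0 (negbTE n4K) => /eqP.
have Tau : \sum_b S b b = k%:R * S i0 i0.
  by rewrite (eq_bigr (fun _ => S i0 i0)) ?sumr_const ?card_ord ?mulr_natl // => b _; rewrite Sc.
have SR : \sum_p \sum_d S p d = k%:R * \sum_d S i0 d.
  by rewrite (eq_bigr (fun _ => \sum_d S i0 d)) ?sumr_const ?card_ord ?mulr_natl // => b _; rewrite Rc.
have SC : \sum_q \sum_b S b q = k%:R * \sum_b S b i0.
  by rewrite (eq_bigr (fun _ => \sum_b S b i0)) ?sumr_const ?card_ord ?mulr_natl // => b _; rewrite Cc.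
have RC : \sum_d S i0 d = \sum_b S b i0.
  by apply: (mulfI nK); rewrite -SR -SC Sig.
have Off : forall p q, p != q -> S p q = \sum_d S i0 d - S i0 i0.
  move=> p q pq; have Epq := E p q; rewrite eq_sym (negbTE pq) mul0r Rc Cc (Sc p) (Sc q) Tau -RC in Epq.
  apply/eqP; rewrite -subr_eq0; apply/eqP.
  have h : 8 * (S p q - (\sum_d S i0 d - S i0 i0)) = 0.
    by apply: (lincomb1 (c1 := -1) Epq); rewrite alphaE; ring.
  by move/eqP: h; rewrite mulf_eq0 (negbTE n8) => /eqP.
have Row : (k%:R - 2) * (\sum_d S i0 d - S i0 i0) = 0.
  have h : \sum_d S i0 d = \sum_(q < k) ((\sum_d S i0 d - S i0 i0)
              + (q == i0)%:R * (2 * S i0 i0 - \sum_d S i0 d)).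
    rewrite [in LHS](eq_bigr (fun q => (\sum_d S i0 d - S i0 i0)
              + (q == i0)%:R * (2 * S i0 i0 - \sum_d S i0 d))) //.
    move=> q _; case: (eqVneq q i0) => [->|qi]; first by rewrite /=; ring.
    by rewrite /= mul0r addr0 Off // eq_sym.
  rewrite big_split /= sum_indr sumr_const card_ord in h.
  have h' : (\sum_d S i0 d - S i0 i0) *+ k + (2 * S i0 i0 - \sum_d S i0 d) - \sum_d S i0 d = 0.
    by rewrite -h subrr.
  by apply: (lincomb1 (c1 := 1) h'); ring.
have rs : \sum_d S i0 d = S i0 i0.
  by apply/eqP; rewrite -subr_eq0; move/eqP: Row; rewrite mulf_eq0 (negbTE nK2).
have s0 : S i0 i0 = 0.
  have Ed := E i0 i0; rewrite eqxx mul1r -RC rs Tau in Ed.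
  have h : ((k * k + 4 * k - 4)%N%:R : C) * S i0 i0 = 0.
    apply: (lincomb1 (c1 := 1) Ed); rewrite natrB; last by lia.
    by rewrite natrD !natrM alphaE; ring.
  have nZ : ((k * k + 4 * k - 4)%N%:R : C) != 0 by apply: natr_neq0; lia.
  by move/eqP: h; rewrite mulf_eq0 (negbTE nZ) => /eqP.
apply/matrixP => p q; rewrite mxE; case: (eqVneq p q) => [<-|pq].
  by rewrite Sc s0.
by rewrite Off // rs subrr.
Qed.
Lemma indepR_thk : (3 <= k)%N -> indepR thk.
Proof.
move=> hk S H; apply/trmx_inj; rewrite trmx0; apply: indepL_thk => //.
rewrite -[RHS]H exchange_big; apply: eq_bigr => i _; apply: eq_bigr => j _.
by rewrite !mxE !adj_thk.
Qed.
Lemma marg_thk : (0 < k)%N ->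
  \sum_b thk b *m adjmx (thk b) = ((k * k + 4 * k - 4)%N%:R : C) *: 1%:M.
Proof.
move=> k0; apply/matrixP => p q; rewrite summxE.
transitivity (\sum_b ((p == b)%:R * ((q == b)%:R * (4 * k%:R + 4 * alpha + alpha ^+ 2))
   + (p == b)%:R * (4 + 2 * alpha) + (q == b)%:R * (4 + 2 * alpha) + 4)).
  by apply: eq_bigr => b _; rewrite adj_thk prodE eqxx /=; ring.
rewrite !big_split /= !sum_indl sumr_const card_ord !mxE.
rewrite natrB; last by lia.
rewrite natrD !natrM alphaE eq_sym; case: (p == q); rewrite /=; ring.
Qed.
End ThetaK.
Definition gtabs : seq (seq (seq int)) := [:: [:: [:: 1%Z; 0%Z]; [:: 0%Z; 2%Z]]; [:: [:: 1%Z; 1%Z]; [:: 1%Z; (-1)%Z]]].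
Definition ttabs : seq (seq (seq int)) := [:: [:: [:: 1%Z; 0%Z; 0%Z]; [:: 0%Z; 0%Z; 2%Z]; [:: 0%Z; 2%Z; 0%Z]]; [:: [:: (-2)%Z; 0%Z; 0%Z]; [:: 0%Z; 1%Z; 0%Z]; [:: 0%Z; 0%Z; 0%Z]]; [:: [:: 0%Z; 0%Z; 0%Z]; [:: (-1)%Z; 0%Z; 0%Z]; [:: 0%Z; 0%Z; (-1)%Z]]; [:: [:: 0%Z; 0%Z; (-1)%Z]; [:: 0%Z; 0%Z; 0%Z]; [:: 0%Z; (-1)%Z; 0%Z]]].
Definition gcertL : seq (seq int) := [:: [:: (-2)%Z; 2%Z; 2%Z; 2%Z]; [:: 0%Z; (-2)%Z; 4%Z; 0%Z]; [:: 0%Z; 4%Z; (-2)%Z; 0%Z]; [:: 4%Z; (-2)%Z; (-2)%Z; (-1)%Z]].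
Definition gdL : int := 6.
Definition gcertR : seq (seq int) := [:: [:: (-2)%Z; 2%Z; 2%Z; 2%Z]; [:: 0%Z; 4%Z; (-2)%Z; 0%Z]; [:: 0%Z; (-2)%Z; 4%Z; 0%Z]; [:: 4%Z; (-2)%Z; (-2)%Z; (-1)%Z]].
Definition gdR : int := 6.
Definition tcert : seq (seq int) := [:: [:: 22%Z; 24%Z; 0%Z; 24%Z; 42%Z; (-8)%Z; 0%Z; (-8)%Z; (-12)%Z; (-30)%Z; 48%Z; (-4)%Z; 48%Z; (-10)%Z; 0%Z; (-4)%Z; 0%Z; 0%Z]; [:: (-72)%Z; (-96)%Z; 0%Z; (-72)%Z; (-72)%Z; 0%Z; 60%Z; 96%Z; 0%Z; 72%Z; (-192)%Z; 48%Z; (-144)%Z; 72%Z; (-60)%Z; 0%Z; 0%Z; 0%Z]; [:: 0%Z; 24%Z; 0%Z; 0%Z; 0%Z; 0%Z; (-96)%Z; (-96)%Z; 0%Z; 0%Z; 48%Z; (-48)%Z; 0%Z; 0%Z; 96%Z; 0%Z; 0%Z; 0%Z]; [:: 36%Z; 48%Z; 0%Z; 0%Z; 36%Z; 0%Z; (-48)%Z; (-48)%Z; 0%Z; (-36)%Z; 96%Z; (-24)%Z; 0%Z; (-36)%Z; 48%Z; 0%Z; 0%Z; 0%Z]; [:: (-27)%Z; (-12)%Z; 0%Z; (-36)%Z; (-27)%Z; 36%Z; (-60)%Z; (-60)%Z; 0%Z; 27%Z; (-24)%Z; (-30)%Z; (-72)%Z; 27%Z; 60%Z; 18%Z; 0%Z;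 0%Z]; [:: (-44)%Z; (-48)%Z; 0%Z; (-48)%Z; (-48)%Z; 16%Z; 0%Z; 16%Z; (-12)%Z; 60%Z; (-96)%Z; 8%Z; (-96)%Z; 56%Z; 0%Z; 8%Z; 0%Z; 0%Z]; [:: 0%Z; 0%Z; 0%Z; 0%Z; 0%Z; 0%Z; 0%Z; 0%Z; 0%Z; 0%Z; (-72)%Z; 0%Z; 0%Z; 0%Z; 0%Z; 0%Z; 0%Z; 0%Z]; [:: (-54)%Z; (-72)%Z; 0%Z; (-72)%Z; (-54)%Z; 0%Z; 72%Z; 72%Z; 0%Z; 54%Z; (-144)%Z; 36%Z; (-144)%Z; 54%Z; (-72)%Z; 36%Z; 0%Z; 0%Z]; [:: (-72)%Z; (-96)%Z; 0%Z; (-72)%Z; (-72)%Z; 0%Z; 96%Z; 96%Z; 0%Z; 72%Z; (-192)%Z; 48%Z; (-144)%Z; 72%Z; (-96)%Z; 0%Z; 0%Z; 0%Z]; [:: 0%Z; 0%Z; 0%Z; 0%Z; 0%Z; 0%Z; 0%Z; 0%Z; 0%Z; 0%Z; 0%Z; 0%Z; (-72)%Z; 0%Z; 0%Z; 0%Z; 0%Z; 0%Z]; [:: (-44)%Z; (-48)%Z; 0%Z; (-48)%Z; (-48)%Z; 16%Z; 0%Z; 16%Z; 60%Z; 60%Z; (-96)%Z; 8%Z; (-96)%Z; (-16)%Z; 0%Z; 8%Z; 0%Z; 0%Z]; [:: 0%Z; 0%Z; 0%Z; 0%Z; 0%Z; 0%Z; 72%Z; 0%Z; 0%Z; 0%Z;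 0%Z; 0%Z; 0%Z; 0%Z; 0%Z; 0%Z; 0%Z; 0%Z]; [:: 0%Z; (-48)%Z; 0%Z; 0%Z; 0%Z; 0%Z; 48%Z; 48%Z; 0%Z; 0%Z; (-96)%Z; 24%Z; 0%Z; 0%Z; (-48)%Z; 0%Z; 0%Z; 0%Z]; [:: 0%Z; 0%Z; 0%Z; 0%Z; 0%Z; 0%Z; (-72)%Z; (-72)%Z; 0%Z; 0%Z; 0%Z; 0%Z; 0%Z; 0%Z; 72%Z; 0%Z; 0%Z; 0%Z]; [:: 0%Z; 0%Z; 72%Z; 0%Z; 0%Z; 0%Z; 0%Z; 0%Z; 0%Z; 0%Z; 0%Z; 0%Z; 0%Z; 0%Z; 0%Z; 0%Z; 0%Z; 0%Z]; [:: 28%Z; (-48)%Z; 0%Z; (-48)%Z; (-48)%Z; 16%Z; 0%Z; 16%Z; 60%Z; (-12)%Z; (-96)%Z; 8%Z; (-96)%Z; (-16)%Z; 0%Z; 8%Z; 0%Z; 0%Z]].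
Definition tdT : int := 72.
Fixpoint isum (n : nat) (g : nat -> int) : int :=
  match n with 0 => 0 | n'.+1 => isum n' g + g n' end.
Definition tabf (T : seq (seq (seq int))) (i p q : nat) : int :=
  nth 0 (nth [::] (nth [::] T i) p) q.
Definition EqP (tab : nat -> nat -> nat -> int) m n e i j :=
  isum n (fun x => tab i (e %/ m)%N x * tab j (e %% m)%N x).
Definition EqQ (tab : nat -> nat -> nat -> int) m n e i j :=
  isum m (fun x => tab j x (e %/ n)%N * tab i x (e %% n)%N).
Definition EqPQ (tab : nat -> nat -> nat -> int) m n e i j :=
  if (e < m * m)%N then EqP tab m n e i j else EqQ tab m n (e - m * m)%N i j.
Definition cert_check r a (Eq : nat -> nat -> nat -> int) (L : seq (seq int)) (d : int) :=
  (d != 0) &&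
  all (fun i0 => all (fun j0 => all (fun i => all (fun j =>
    isum a (fun e => nth 0 (nth [::] L (i0 * r + j0)%N) e * Eq e i j)
      == (if (i == i0) && (j == j0) then d else 0)) (iota 0 r)) (iota 0 r)) (iota 0 r)) (iota 0 r).
Lemma gcheckL : cert_check 2 4 (EqP (tabf gtabs) 2 2) gcertL gdL.
Proof. by vm_compute. Qed.
Lemma gcheckR : cert_check 2 4 (EqQ (tabf gtabs) 2 2) gcertR gdR.
Proof. by vm_compute. Qed.
Lemma tcheck : cert_check 4 18 (EqPQ (tabf ttabs) 3 3) tcert tdT.
Proof. by vm_compute. Qed.
Section Cert.
Variable C : numClosedFieldType.
Lemma isumE n g : ((isum n g)%:~R : C) = \sum_(x < n) (g x)%:~R.
Proof. by elim: n => [|n IH]; rewrite ?big_ord0 // big_ord_recr /= intrD IH. Qed.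
Definition mtab m n (t : nat -> nat -> int) : 'M[C]_(m,n) := \matrix_(p, q) (t p q)%:~R.
Lemma adjmx_mtab m n t : adjmx (mtab m n t) = mtab n m (fun p q => t q p).
Proof. by apply/matrixP => p q; rewrite adjmxE !mxE conj_Creal // realz. Qed.
Lemma mtab_mul m n p t1 t2 :
  mtab m n t1 *m mtab n p t2 = mtab m p (fun a b => isum n (fun x => t1 a x * t2 x b)).
Proof.
apply/matrixP => a b; rewrite !mxE isumE; apply: eq_bigr => x _.
by rewrite !mxE intrM.
Qed.
Lemma cert_core r a (Eq : nat -> nat -> nat -> int) (L : seq (seq int)) (d : int)
    (S : 'M[C]_r) :
  cert_check r a Eq L d ->
  (forall e, (e < a)%N -> \sum_i \sum_j S i j * (Eq e i j)%:~R = 0) -> S = 0.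
Proof.
case/andP => d0 /allP chk HE; apply/matrixP => i0 j0; rewrite mxE.
have chk' : forall i j : 'I_r, isum a (fun e => nth 0 (nth [::] L (i0 * r + j0)%N) e * Eq e i j)
    = (if (i == i0) && (j == j0) then d else 0).
  move=> i j; have := chk i0; rewrite mem_iota /= => /(_ (ltn_ord i0)) /allP /(_ j0).
  rewrite mem_iota /= => /(_ (ltn_ord j0)) /allP /(_ i); rewrite mem_iota /= => /(_ (ltn_ord i)).
  by move=> /allP /(_ j); rewrite mem_iota /= => /(_ (ltn_ord j)) /eqP.
have dC : (d%:~R : C) != 0 by rewrite intr_eq0.
apply: (mulfI dC); rewrite mulr0.
transitivity (\sum_i \sum_j S i j * (isum a (fun e => nth 0 (nth [::] L (i0 * r + j0)%N) e * Eq e i j))%:~R).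
  rewrite (bigD1 i0) //= [X in _ + X]big1 => [|i /negbTE ii]; last first.
    by apply: big1 => j _; rewrite chk' ii /= mulr0.
  rewrite addr0 (bigD1 j0) //= [X in _ + X]big1 => [|j /negbTE jj]; last by rewrite chk' eqxx jj /= mulr0.
  by rewrite chk' !eqxx /= !addr0 mulrC.
transitivity (\sum_(e < a) (nth 0 (nth [::] L (i0 * r + j0)%N) e)%:~R
                * \sum_i \sum_j S i j * (Eq e i j)%:~R).
  symmetry; under eq_bigr => e _ do rewrite mulr_sumr.
  rewrite exchange_big; apply: eq_bigr => i _.
  under eq_bigr => e _ do rewrite mulr_sumr.
  rewrite exchange_big; apply: eq_bigr => j _.
  rewrite isumE mulr_sumr; apply: eq_bigr => e _; rewrite intrM; ring.
by apply: big1 => e _; rewrite HE // mulr0.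
Qed.
Lemma mtab_prod1 m n (t1 t2 : nat -> nat -> int) (p q : 'I_m) :
  (mtab m n t1 *m adjmx (mtab m n t2)) p q = (isum n (fun x => t1 p x * t2 q x))%:~R.
Proof. by rewrite adjmx_mtab mtab_mul mxE. Qed.
Lemma mtab_prod2 m n (t1 t2 : nat -> nat -> int) (p q : 'I_n) :
  (adjmx (mtab m n t2) *m mtab m n t1) p q = (isum m (fun x => t2 x p * t1 x q))%:~R.
Proof. by rewrite adjmx_mtab mtab_mul mxE. Qed.
Lemma H1_eqs r m n (tab : nat -> nat -> nat -> int) (S : 'M[C]_r) :
  \sum_i \sum_j S i j *: (mtab m n (tab i) *m adjmx (mtab m n (tab j))) = 0 ->
  forall e, (e < m * m)%N -> \sum_i \sum_j S i j * (EqP tab m n e i j)%:~R = 0.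
Proof.
move=> H e he; have m0 : (0 < m)%N by rewrite lt0n; apply/eqP => m0; rewrite m0 in he.
have hp : (e %/ m < m)%N by rewrite ltn_divLR.
have := congr1 (fun M : 'M[C]_m => M (Ordinal hp) (Ordinal (ltn_pmod e m0))) H.
move=> E; apply: (etrans _ (etrans E _)); last by rewrite mxE.
rewrite /= summxE; apply: eq_bigr => i _; rewrite summxE; apply: eq_bigr => j _.
by rewrite mxE mtab_prod1.
Qed.
Lemma H2_eqs r m n (tab : nat -> nat -> nat -> int) (S : 'M[C]_r) :
  \sum_i \sum_j S i j *: (adjmx (mtab m n (tab j)) *m mtab m n (tab i)) = 0 ->
  forall e, (e < n * n)%N -> \sum_i \sum_j S i j * (EqQ tab m n e i j)%:~R = 0.
Proof.
move=> H e he; have n0 : (0 < n)%N by rewrite lt0n; apply/eqP => n0; rewrite n0 in he.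
have hp : (e %/ n < n)%N by rewrite ltn_divLR.
have := congr1 (fun M : 'M[C]_n => M (Ordinal hp) (Ordinal (ltn_pmod e n0))) H.
move=> E; apply: (etrans _ (etrans E _)); last by rewrite mxE.
rewrite /= summxE; apply: eq_bigr => i _; rewrite summxE; apply: eq_bigr => j _.
by rewrite mxE mtab_prod2.
Qed.
Lemma indepL_mtab r m n (tab : nat -> nat -> nat -> int) L d :
  cert_check r (m * m) (EqP tab m n) L d -> indepL (fun i : 'I_r => mtab m n (tab i)).
Proof. by move=> ch S H; apply: (cert_core ch); apply: H1_eqs. Qed.
Lemma indepR_mtab r m n (tab : nat -> nat -> nat -> int) L d :
  cert_check r (n * n) (EqQ tab m n) L d -> indepR (fun i : 'I_r => mtab m n (tab i)).
Proof. by move=> ch S H; apply: (cert_core ch); apply: H2_eqs. Qed.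
Lemma indep2_mtab r m n (tab : nat -> nat -> nat -> int) L d :
  cert_check r (m * m + n * n) (EqPQ tab m n) L d -> indep2 (fun i : 'I_r => mtab m n (tab i)).
Proof.
move=> ch S H1 H2; apply: (cert_core ch) => e he; rewrite /EqPQ.
case: ltnP => h; first by apply: H1_eqs.
by apply: H2_eqs => //; rewrite ltn_subLR.
Qed.
Lemma marg1_mtab r m n (tab : nat -> nat -> nat -> int) :
  marg1 (fun i : 'I_r => mtab m n (tab i))
  = mtab m m (fun p q => isum r (fun i => isum n (fun x => tab i p x * tab i q x))).
Proof.
apply/matrixP => p q; rewrite summxE mxE isumE; apply: eq_bigr => i _.
by rewrite mtab_prod1.
Qed.
Lemma marg2_mtab r m n (tab : nat -> nat -> nat -> int) :
  marg2 (fun i : 'I_r => mtab m n (tab i))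
  = mtab n n (fun p q => isum r (fun i => isum m (fun x => tab i x p * tab i x q))).
Proof.
apply/matrixP => p q; rewrite summxE mxE isumE; apply: eq_bigr => i _.
by rewrite mtab_prod2.
Qed.
Lemma mtab_ext m n (t1 t2 : nat -> nat -> int) :
  all (fun p => all (fun q => t1 p q == t2 p q) (iota 0 n)) (iota 0 m) ->
  mtab m n t1 = mtab m n t2.
Proof.
move=> /allP H; apply/matrixP => p q; rewrite !mxE.
have := H p; rewrite mem_iota /= => /(_ (ltn_ord p)) /allP /(_ q).
by rewrite mem_iota /= => /(_ (ltn_ord q)) /eqP ->.
Qed.
Definition gam (i : 'I_2) : 'M[C]_2 := mtab 2 2 (tabf gtabs i).
Definition th3 (i : 'I_4) : 'M[C]_3 := mtab 3 3 (tabf ttabs i).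
Lemma indepL_gam : indepL gam.
Proof. exact: (@indepL_mtab 2 2 2 _ _ _ gcheckL). Qed.
Lemma indepR_gam : indepR gam.
Proof. exact: (@indepR_mtab 2 2 2 _ _ _ gcheckR). Qed.
Lemma indep2_th3 : indep2 th3.
Proof. exact: (@indep2_mtab 4 3 3 _ _ _ tcheck). Qed.
Definition gdiag (p q : nat) : int := if p == q then (if p == 0%N then 3 else 6) else 0.
Definition tdiag (p q : nat) : int := if p == q then 6 else 0.
Lemma marg1_gam : marg1 gam = mtab 2 2 gdiag.
Proof. by rewrite marg1_mtab; apply: mtab_ext; vm_compute. Qed.
Lemma marg2_gam : marg2 gam = mtab 2 2 gdiag.
Proof. by rewrite marg2_mtab; apply: mtab_ext; vm_compute. Qed.
Lemma marg1_th3 : marg1 th3 = mtab 3 3 tdiag.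
Proof. by rewrite marg1_mtab; apply: mtab_ext; vm_compute. Qed.
Lemma marg2_th3 : marg2 th3 = mtab 3 3 tdiag.
Proof. by rewrite marg2_mtab; apply: mtab_ext; vm_compute. Qed.
Lemma gdiag_sigma : mtab 2 2 gdiag = 9 *: sigma_mx C.
Proof.
have h3 : (3 : C) != 0 by rewrite pnatr_eq0.
apply/matrixP => p q; rewrite !mxE.
by case: p => [[|[|p]] hp] //; case: q => [[|[|q]] hq] //=; rewrite ?mulr0 //; field.
Qed.
Lemma tdiag_one : mtab 3 3 tdiag = 6 *: 1%:M.
Proof.
apply/matrixP => p q; rewrite !mxE /tdiag -val_eqE /=.
by case: (nat_of_ord p == q); rewrite /= ?mulr1 ?mulr0.
Qed.
End Cert.
Arguments mxtens_index {m n}.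
Arguments mxtens_unindex {m n}.
Section Main.
Variable C : numClosedFieldType.
Lemma tensZl m n p q (a : C) (A : 'M[C]_(m,n)) (B : 'M[C]_(p,q)) :
  (a *: A) *t B = a *: (A *t B).
Proof.
apply/matrixP => x y; case: (mxtens_indexP x) => i j; case: (mxtens_indexP y) => k l.
by rewrite [LHS]tensmxE [RHS]mxE tensmxE mxE mulrA.
Qed.
Lemma tensZr m n p q (a : C) (A : 'M[C]_(m,n)) (B : 'M[C]_(p,q)) :
  A *t (a *: B) = a *: (A *t B).
Proof.
apply/matrixP => x y; case: (mxtens_indexP x) => i j; case: (mxtens_indexP y) => k l.
by rewrite [LHS]tensmxE [RHS]mxE tensmxE mxE mulrCA.
Qed.
Lemma kraus1 r m n (f : 'I_r -> 'M[C]_(m,n)) : krausmap (kseq f) 1%:M = marg1 f.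
Proof. by rewrite krausmapE; apply: eq_bigr => i _; rewrite mulmx1. Qed.
Lemma krausHS r m n (f : 'I_r -> 'M[C]_(m,n)) (A : 'M[C]_n) :
  adjmx A = marg2 f -> HSadj_at (krausmap (kseq f)) 1%:M A.
Proof.
move=> hA X; rewrite adjmx1 mul1mx hA krausmapE /marg2 mulmx_suml !raddf_sum.
by apply: eq_bigr => i _; rewrite /= mxtrace_mulC mulmxA.
Qed.
Lemma sigma_adj : adjmx (sigma_mx C) = sigma_mx C.
Proof.
apply/matrixP => p q; rewrite adjmxE !mxE.
case: p => [[|[|p]] hp] //; case: q => [[|[|q]] hq] //=; rewrite ?conjC0 //.
  by rewrite conj_Creal // ?(realn, rpredV, rpredM).
by rewrite conj_Creal // ?(realn, rpredV, rpredM).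
Qed.
Variable k : nat.
Hypothesis hk : (3 <= k)%N.
Definition cK : nat := (k * k + 4 * k - 4)%N.
Definition muC : C := sqrtC ((162 * k * cK)%N%:R^-1).
Definition Fam := sfam muC (tfam (tfam (gam C) (th3 C)) (@thk C k)).
Lemma k0 : (0 < k)%N. Proof. exact: leq_trans hk. Qed.
Lemma cK0 : (0 < cK)%N. Proof. rewrite /cK; have := hk; lia. Qed.
Lemma N0 : (0 < 162 * k * cK)%N. Proof. by rewrite !muln_gt0 k0 cK0. Qed.
Lemma mu2 : muC * muC^* = (162 * k * cK)%N%:R^-1.
Proof.
have x0 : (0 : C) <= (162 * k * cK)%N%:R^-1 by rewrite invr_ge0 ler0n.
rewrite conj_Creal; last by rewrite ger0_real // sqrtC_ge0.
by rewrite -expr2 sqrtCK.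
Qed.
Lemma mu0 : muC != 0.
Proof. by rewrite sqrtC_eq0 invr_eq0 pnatr_eq0 -lt0n N0. Qed.
Lemma indep2_Fam : indep2 Fam.
Proof.
apply: indep2_scale; first exact: mu0.
apply: indep2_tensR; [|exact: indepL_thk|exact: indepR_thk].
apply: indep2_tensL; [exact: indepL_gam|exact: indepR_gam|exact: indep2_th3].
Qed.
Lemma marg2_thk : marg2 (@thk C k) = (cK%:R : C) *: 1%:M.
Proof.
rewrite -(marg_thk C k0) /marg2; apply: eq_bigr => b _; by rewrite !adj_thk.
Qed.
Lemma marg1_thk : marg1 (@thk C k) = (cK%:R : C) *: 1%:M.
Proof. exact: (marg_thk C k0). Qed.
Lemma D1E : D1 C k = ((3 : C)^-1 * (k%:R)^-1) *: ((sigma_mx C *t 1%:M) *t 1%:M).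
Proof. by rewrite /D1 !tensZr tensZl scalerA mulrC. Qed.
Lemma scal_eq : (162 * k * cK)%N%:R^-1 * (9 * 6 * cK%:R) = ((3 : C)^-1 * (k%:R)^-1).
Proof.
have kn : (k%:R : C) != 0 by rewrite pnatr_eq0 -lt0n k0.
have cn : (cK%:R : C) != 0 by rewrite pnatr_eq0 -lt0n cK0.
rewrite !natrM; field; rewrite ?kn ?cn //= pnatr_eq0.
Qed.
Lemma marg1_Fam : marg1 Fam = D1 C k.
Proof.
rewrite /Fam marg1_scale !marg1_tens marg1_gam marg1_th3 marg1_thk gdiag_sigma tdiag_one.
by rewrite !(tensZl, tensZr) !scalerA D1E -scal_eq mu2; congr (_ *: _); ring.
Qed.
Lemma marg2_Fam : marg2 Fam = D1 C k.
Proof.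
rewrite /Fam marg2_scale !marg2_tens marg2_gam marg2_th3 marg2_thk gdiag_sigma tdiag_one.
by rewrite !(tensZl, tensZr) !scalerA D1E -scal_eq mu2; congr (_ *: _); ring.
Qed.
Lemma adjD1 : adjmx (D1 C k) = D1 C k.
Proof.
rewrite D1E adjmxZ !adjmx_tens sigma_adj !adjmx1 conj_Creal //.
by rewrite ?(realn, rpredV, rpredM).
Qed.
Theorem main_C :
  exists Phi : 'M[C]_(2 * 3 * k) -> 'M[C]_(2 * 3 * k),
    extreme_point (CPset (D1 C k) (D1 C k)) Phi /\ choi_rank Phi = (8 * k)%N.
Proof.
exists (krausmap (kseq Fam)); split.
  apply: extreme_kraus; first exact: indep2_Fam.
  split; first by exists (kseq Fam).
  split; first by rewrite kraus1 marg1_Fam.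
  by apply: krausHS; rewrite adjD1 marg2_Fam.
exact: (choi_rank_free (indep2_free indep2_Fam)).
Qed.
End Main.
Unset Implicit Arguments.

Theorem mainTheorem10 (R : realType) (k : nat) (hk : (3 <= k)%N) :
  exists Phi : 'M[R[i]]_(2 * 3 * k) -> 'M[R[i]]_(2 * 3 * k),
    extreme_point (CPset (D1 R[i] k) (D1 R[i] k)) Phi /\
    choi_rank Phi = (8 * k)%N.
Proof. exact: (main_C R[i] hk). Qed.
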